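(* Let $G$ be a finite group with $|G|\ge3$ satisfying Property P. Then for every $S\in\mathcal B(G)$ with $\max\Delta(\mathsf L(S))\ge2$ there exists $T\in\mathcal B(G)$ with $|T|<|S|$ and $\max\Delta(\mathsf L(T))\ge\max\Delta(\mathsf L(S))-1$.
   Context: For a finite group $G$ (multiplicative, identity $1_G$), $\mathcal F(G)$ is the free abelian monoid with basis $G$ (sequences $S=g_1\boldsymbol{\cdot}\ldots\boldsymbol{\cdot}g_\ell$, operation $\boldsymbol{\cdot}$, length $|S|=\ell$). $\pi(S)=\{g_{\tau(1)}\cdots g_{\tau(\ell)}:\tau\text{ a permutation of }[1,\ell]\}$, $\mathcal B(G)=\{S\in\mathcal F(G):1_G\in\pi(S)\}$, $\mathcal A(G)$ its set of atoms. For $A\in\mathcal B(G)$, $\mathsf L(A)=\{k\in\mathbb N: A=U_1\boldsymbol{\cdot}\ldots\boldsymbol{\cdot}U_k \text{ with } U_i\in\mathcal A(G)\}$ (and $\mathsf L(1_{\mathcal F(G)})=\{0\}$). For a finite set $L=\{m_1<\dots<m_k\}\subset\mathbb Z$, $\Delta(L)=\{m_i-m_{i-1}:i\in[2,k]\}$. $G$ satisfies Property P if: whenever $U=g_1\boldsymbol{\cdot}\ldots\boldsymbol{\cdot}g_\ell\in\mathcal A(G)$ and $g_1=h_1h_2$ with $h_1,h_2\in G$, the sequence $h_1\boldsymbol{\cdot}h_2\boldsymbol{\cdot}g_2\boldsymbol{\cdot}\ldots\boldsymbol{\cdot}g_\ell$ is either an atom or a product of two atoms of $\mathcal B(G)$.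 *)

(* Defs.v *)
(* The finite group G is the whole finGroupType gT.
   Sequences over G (elements of the free abelian monoid F(G)) are
   represented by lists [seq gT], considered up to permutation (perm_eq). *)
From mathcomp Require Import all_boot all_fingroup.
Set Implicit Arguments. Unset Strict Implicit. Unset Printing Implicit Defensive.
Local Open Scope group_scope.

Definition prod_one (gT : finGroupType) (S : seq gT) : Prop :=
  exists t : seq gT, perm_eq S t /\ \prod_(g <- t) g = 1.

Definition atom (gT : finGroupType) (U : seq gT) : Prop :=
  prod_one U /\ U <> [::] /\
  forall V W : seq gT, perm_eq U (V ++ W) -> prod_one V -> prod_one W ->
    V = [::] \/ W = [::].

Definition in_L (gT : finGroupType) (A : seq gT) (k : nat) : Prop :=
  exists fs : seq (seq gT),
    size fs = k /\ (forall U, U \in fs -> atom U) /\ perm_eq A (flatten fs).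

Definition in_Delta (gT : finGroupType) (A : seq gT) (d : nat) : Prop :=
  exists m m' : nat, (m < m')%N /\ in_L A m /\ in_L A m' /\
    (forall k, (m < k < m')%N -> ~ in_L A k) /\ d = (m' - m)%N.

Definition is_max_Delta (gT : finGroupType) (A : seq gT) (d : nat) : Prop :=
  in_Delta A d /\ forall d', in_Delta A d' -> (d' <= d)%N.

Definition propertyP (gT : finGroupType) : Prop :=
  forall (U : seq gT) (g1 : gT) (rest : seq gT) (h1 h2 : gT),
    atom U -> perm_eq U (g1 :: rest) -> g1 = h1 * h2 ->
    atom [:: h1, h2 & rest] \/
    exists V W : seq gT, atom V /\ atom W /\ perm_eq [:: h1, h2 & rest] (V ++ W).

(* Main.v *)
Require Import Defs.
From mathcomp Require Import all_boot all_fingroup.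
From Stdlib Require Import Classical.
From mathcomp Require Import zify.
Set Implicit Arguments. Unset Strict Implicit. Unset Printing Implicit Defensive.
Local Open Scope group_scope.

Lemma prod_cat (gT : finGroupType) (a b : seq gT) :
  \prod_(x <- a ++ b) x = \prod_(x <- a) x * \prod_(x <- b) x.
Proof. by rewrite big_cat. Qed.

Lemma prod_cons (gT : finGroupType) (x : gT) (b : seq gT) :
  \prod_(y <- x :: b) y = x * \prod_(y <- b) y.
Proof. by rewrite big_cons. Qed.

Lemma prod_nil (gT : finGroupType) : \prod_(y <- [::] : seq gT) y = 1.
Proof. by rewrite big_nil. Qed.

Lemma prod_one_perm (gT : finGroupType) (A B : seq gT) :
  perm_eq A B -> prod_one A -> prod_one B.
Proof.
move=> pAB [t [pt ht]]; exists t; split=> //.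
by apply: perm_trans pt; rewrite perm_sym.
Qed.

Lemma prod_one_nil (gT : finGroupType) : prod_one ([::] : seq gT).
Proof. by exists [::]; rewrite big_nil. Qed.

Lemma prod_one_cat (gT : finGroupType) (A B : seq gT) :
  prod_one A -> prod_one B -> prod_one (A ++ B).
Proof.
move=> [a [pa ha]] [b [pb hb]]; exists (a ++ b); split.
  by rewrite (perm_cat pa pb).
by rewrite prod_cat ha hb mulg1.
Qed.

Lemma prod_one_flatten (gT : finGroupType) (fs : seq (seq gT)) :
  (forall U, U \in fs -> prod_one U) -> prod_one (flatten fs).
Proof.
elim: fs => [|U fs IH] H /=; first exact: prod_one_nil.
apply: prod_one_cat; first by apply: H; rewrite inE eqxx.
by apply: IH => V hV; apply: H; rewrite inE hV orbT.
Qed.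

Lemma atom_perm (gT : finGroupType) (A B : seq gT) :
  perm_eq A B -> atom A -> atom B.
Proof.
move=> pAB [h1 [h2 h3]]; split; first exact: prod_one_perm h1.
split.
  by move=> EB; move: h2 (perm_size pAB); rewrite EB; case: (A).
move=> V W pB; apply: h3; exact: perm_trans pAB pB.
Qed.

Lemma atom_nonnil (gT : finGroupType) (A : seq gT) : atom A -> (0 < size A)%N.
Proof. by case=> _ [h _]; case: A h. Qed.

Lemma size_flatten_atoms (gT : finGroupType) (fs : seq (seq gT)) :
  (forall U, U \in fs -> atom U) -> (size fs <= size (flatten fs))%N.
Proof.
elim: fs => [|U fs IH] H //=.
rewrite size_cat; have := atom_nonnil (H U (mem_head _ _)).
have := IH (fun V hV => H V (@mem_behead _ (U :: fs) _ hV)); lia.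
Qed.

Lemma in_L_le (gT : finGroupType) (A : seq gT) k : in_L A k -> (k <= size A)%N.
Proof.
move=> [fs [<- [H p]]]; rewrite (perm_size p); exact: size_flatten_atoms.
Qed.

Lemma factor_exists (gT : finGroupType) (X : seq gT) :
  prod_one X -> exists fs, (forall U, U \in fs -> atom U) /\ perm_eq X (flatten fs).
Proof.
move: {2}(size X) (leqnn (size X)) => n; elim: n X => [|n IH] X hs hX.
  by exists [::]; split => //; case: X hs hX.
case: (classic (X = [::])) => [->|hne]; first by exists [::].
case: (classic (atom X)) => [hA|hnA].
  by exists [:: X]; split; [move=> U; rewrite inE => /eqP -> | rewrite /= cats0].
have : exists V W, perm_eq X (V ++ W) /\ prod_one V /\ prod_one W /\ V <> [::] /\ W <> [::].
  apply: NNPP => hn; apply: hnA; split=> //; split=> // V W p pV pW.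
  apply: NNPP => hn2; apply: hn; exists V, W; repeat split => //.
    by move=> e; apply: hn2; left.
  by move=> e; apply: hn2; right.
move=> [V [W [p [pV [pW [nV nW]]]]]].
have sX := perm_size p; rewrite size_cat in sX.
have sV : (size V <= n)%N.
  by case: (W) nW sX => // w W0 _ /= sX; lia.
have sW : (size W <= n)%N.
  by case: (V) nV sX => // v V0 _ /= sX; lia.
have [fV [aV pfV]] := IH V sV pV.
have [fW [aW pfW]] := IH W sW pW.
exists (fV ++ fW); split.
  by move=> U; rewrite mem_cat => /orP [/aV|/aW].
by rewrite flatten_cat (perm_trans p) // perm_cat.
Qed.
Lemma orderings (gT : finGroupType) (fs : seq (seq gT)) :
  (forall U, U \in fs -> atom U) ->
  exists ts : seq (seq gT), size ts = size fs /\ perm_eq (flatten fs) (flatten ts) /\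
    forall u, u \in ts -> atom u /\ \prod_(x <- u) x = 1.
Proof.
elim: fs => [|U fs IH] H; first by exists [::].
have [ts [s1 [p1 h1]]] := IH (fun V hV => H V (@mem_behead _ (U :: fs) _ hV)).
have aU := H U (mem_head _ _).
have [t [pt ht]] := aU.1.
exists (t :: ts); split; first by rewrite /= s1.
split; first by rewrite /= perm_cat.
move=> u; rewrite inE => /orP [/eqP ->|/h1 //]; split=> //.
exact: atom_perm pt aU.
Qed.

Lemma split_mem (T : eqType) (x : T) (t : seq T) :
  x \in t -> exists t1 t2, t = t1 ++ x :: t2.
Proof. by case/splitPr => t1 t2; exists t1, t2. Qed.

Lemma rot_prod (gT : finGroupType) (W : seq gT) (x : gT) :
  prod_one W -> x \in W -> exists w, perm_eq W (x :: w) /\ x * \prod_(y <- w) y = 1.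
Proof.
move=> [t [pt ht]] xW.
have xt : x \in t by rewrite -(perm_mem pt).
have [t1 [t2 E]] := split_mem xt.
exists (t2 ++ t1); split.
  apply: (perm_trans pt); rewrite E -cat1s perm_catCA /= perm_cons perm_catC //.
move: ht; rewrite E prod_cat prod_cons prod_cat => h.
have : (x * \prod_(y <- t2) y) * \prod_(y <- t1) y = 1.
  have e : \prod_(y <- t1) y = (x * \prod_(y <- t2) y)^-1.
    by rewrite -(mulg1_eq h) invgK.
  by rewrite e mulgV.
by rewrite mulgA.
Qed.

Lemma unmerge (gT : finGroupType) (h1 h2 : gT) (Y : seq gT) :
  prod_one (h1 * h2 :: Y) -> prod_one [:: h1, h2 & Y].
Proof.
move=> hP; have [w [pw hw]] := rot_prod hP (mem_head _ _).
exists [:: h1, h2 & w]; split.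
  by rewrite !perm_cons -(perm_cons (h1 * h2)).
by rewrite !prod_cons mulgA.
Qed.

Lemma merge_atom (gT : finGroupType) (u1 u2 : seq gT) (h1 h2 : gT) :
  atom (u1 ++ [:: h1, h2 & u2]) -> \prod_(x <- u1 ++ [:: h1, h2 & u2]) x = 1 ->
  atom (h1 * h2 :: u1 ++ u2).
Proof.
move=> aU hU.
have pU : perm_eq (u1 ++ [:: h1, h2 & u2]) [:: h1, h2 & u1 ++ u2].
  by rewrite -[[:: h1, h2 & u2]]/([:: h1; h2] ++ u2) perm_catCA.
have key : forall V W, perm_eq (h1 * h2 :: u1 ++ u2) (V ++ W) -> h1 * h2 \in V ->
    prod_one V -> prod_one W -> W = [::].
  move=> V W p gV pV pW.
  have pV2 := perm_to_rem gV.
  have p2 : perm_eq (u1 ++ u2) (rem (h1 * h2) V ++ W).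
    by rewrite -(perm_cons (h1 * h2)); apply: (perm_trans p); rewrite -cat_cons perm_cat2r.
  have pVu : prod_one [:: h1, h2 & rem (h1 * h2) V].
    by apply: unmerge; exact: prod_one_perm pV2 pV.
  have pp : perm_eq (u1 ++ [:: h1, h2 & u2]) ([:: h1, h2 & rem (h1 * h2) V] ++ W).
    by apply: (perm_trans pU); rewrite /= !perm_cons.
  by have [//|//] := aU.2.2 [:: h1, h2 & rem (h1 * h2) V] W pp pVu pW.
split.
  exists (u1 ++ h1 * h2 :: u2); split.
    by rewrite perm_sym -(cat1s (h1 * h2) u2) perm_catCA.
  by move: hU; rewrite !prod_cat !prod_cons -mulgA.
split=> // V W p pV pW.
have : h1 * h2 \in V ++ W by rewrite -(perm_mem p) mem_head.
rewrite mem_cat => /orP [gV|gW]; first by right; exact: key p gV pV pW.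
left; apply: key gW pW pV; by rewrite (perm_trans p) // perm_catC.
Qed.

Lemma transferP (gT : finGroupType) (h1 h2 : gT) (R S : seq gT) j :
  propertyP gT -> perm_eq S [:: h1, h2 & R] -> in_L (h1 * h2 :: R) j ->
  in_L S j \/ in_L S j.+1.
Proof.
move=> hP pS [fs [sz [aF pF]]].
have : h1 * h2 \in flatten fs by rewrite -(perm_mem pF) mem_head.
move=> /flattenP [W Wfs gW].
have pfs := perm_to_rem Wfs.
have pW := perm_to_rem gW.
have pR : perm_eq R (rem (h1 * h2) W ++ flatten (rem W fs)).
  rewrite -(perm_cons (h1 * h2)); apply: (perm_trans pF).
  apply: (perm_trans (perm_flatten pfs)) => /=; by rewrite -cat_cons perm_cat2r.
have pS2 : perm_eq S ([:: h1, h2 & rem (h1 * h2) W] ++ flatten (rem W fs)).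
  by apply: (perm_trans pS) => /=; rewrite !perm_cons.
have aW := aF W Wfs.
have sR : size (rem W fs) = j.-1 by rewrite size_rem // sz.
have j0 : (0 < j)%N by rewrite -sz; case: (fs) Wfs.
case: (hP W (h1 * h2) (rem (h1 * h2) W) h1 h2 aW pW erefl) => [a1|[V [W' [aV [aW' pVW]]]]].
  left; exists ([:: h1, h2 & rem (h1 * h2) W] :: rem W fs); split.
    by rewrite /= sR; lia.
  split; last by [].
  move=> U; rewrite inE => /orP [/eqP ->//|/mem_rem]; exact: aF.
right; exists (V :: W' :: rem W fs); split.
  by rewrite /= sR; lia.
split.
  move=> U; rewrite !inE => /orP [/eqP ->//|/orP [/eqP ->//|/mem_rem]]; exact: aF.
apply: (perm_trans pS2); rewrite [flatten (_ :: _)]/= catA perm_cat2r //.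
Qed.

Definition sep (T : eqType) (zs : seq (seq T)) (a b : T) : Prop :=
  exists i j, i != j /\ a \in nth [::] zs i /\ b \in nth [::] zs j.

Definition nn (T : eqType) (s : seq T) : bool := (0 < size s)%N.

Lemma flat_set (T : eqType) (s : seq (seq T)) i a :
  (i < size s)%N -> a \in nth [::] s i ->
  perm_eq (flatten s) (a :: flatten (set_nth [::] s i (rem a (nth [::] s i)))).
Proof.
elim: s i => [|W s IH] [|i] //= hi ha.
  rewrite -cat_cons perm_cat2r; exact: perm_to_rem.
by rewrite perm_sym -cat1s perm_catCA /= perm_cat2l perm_sym; apply: IH.
Qed.

Lemma flatten_nil_count (T : eqType) (s : seq (seq T)) :
  flatten s = [::] -> count (@nn T) s = 0.
Proof. by elim: s => [|[|x W] s IH] //= /IH ->. Qed.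

Lemma count_bound (T : eqType) n : forall (zs zs' : seq (seq T)),
  (size (flatten zs) + size zs <= n)%N -> perm_eq (flatten zs) (flatten zs') ->
  (forall u, u \in zs -> forall u1 u2 a b, u = u1 ++ [:: a, b & u2] -> ~ sep zs' a b) ->
  (count (@nn T) zs' <= count (@nn T) zs)%N.
Proof.
elim: n => [|n IH] zs zs' hs hp hsep.
  case: zs hs hp hsep => [|z0 zs0]; last by rewrite /= addnS.
  move=> _ hp _.
  have := perm_size hp; rewrite /= => /esym/eqP; rewrite size_eq0 => /eqP.
  by move/flatten_nil_count ->.
case: zs hs hp hsep => [|[|a U'] zs0] hs hp hsep.
- have := perm_size hp; rewrite /= => /esym/eqP; rewrite size_eq0 => /eqP.
  by move/flatten_nil_count ->.
- rewrite /= add0n; apply: IH => //.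
    by move: hs; rewrite /= addnS.
  by move=> u hu; apply: hsep; rewrite inE hu orbT.
have aF : a \in flatten zs' by rewrite -(perm_mem hp) /= mem_head.
case/flattenP: aF => W Wz aW.
set i := index W zs'.
have hi : (i < size zs')%N by rewrite index_mem.
have Wi : nth [::] zs' i = W by rewrite nth_index.
set zn := set_nth [::] zs' i (rem a W).
have pz : perm_eq (flatten zs') (a :: flatten zn).
  by rewrite /zn -Wi; apply: flat_set; rewrite ?Wi.
have pn : perm_eq (flatten (U' :: zs0)) (flatten zn).
  by rewrite -(perm_cons a); apply: perm_trans pz.
have subn : forall k x, x \in nth [::] zn k -> x \in nth [::] zs' k.
  move=> k x; rewrite /zn nth_set_nth /=; case: eqP => [->|//].
  by rewrite Wi; apply: mem_rem.
have sepn : forall x y, sep zn x y -> sep zs' x y.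
  by move=> x y [k [l [kl [hx hy]]]]; exists k, l; split; [|split; apply: subn hx || apply: subn hy].
have IH' := IH (U' :: zs0) zn.
have cnt : count (@nn T) zn = (count (@nn T) zs' + nn (rem a W) - nn W)%N.
  by rewrite /zn count_set_nth_ltn // Wi.
have nW : nn W by rewrite /nn; case: (W) aW.
have IHc : (count (@nn T) zn <= count (@nn T) (U' :: zs0))%N.
  apply: IH'; [by move: hs; rewrite /=; lia | by [] |].
  move=> u; rewrite inE => /orP [/eqP ->|hu] u1 u2 x y E.
    move/sepn; apply: (hsep (a :: U') (mem_head _ _) (a :: u1) u2 x y).
    by rewrite E.
  have hu' : u \in (a :: U') :: zs0 by rewrite inE hu orbT.
  by move/sepn; apply: (hsep u hu' u1 u2 x y).
move: IHc; rewrite cnt nW /=.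
case: U' hs hp hsep pn IH' => [|b U''] hs hp hsep pn IH'.
  rewrite /= add0n; case: (nn (rem a W)) => /=; lia.
case hr : (nn (rem a W)) => /=; first lia.
exfalso.
have bF : b \in flatten zn by rewrite -(perm_mem pn) /= mem_head.
case/flattenP: bF => W2 W2z bW2.
set j := index W2 zn.
have Wj : nth [::] zn j = W2 by rewrite nth_index.
have ij : i != j.
  apply/eqP => eij; move: bW2; rewrite -Wj -eij /zn nth_set_nth /= eqxx.
  by move: hr; rewrite /nn; case: (rem a W).
apply: (hsep (a :: b :: U'') (mem_head _ _) [::] U'' a b) => //.
exists i, j; split=> //; split; first by rewrite Wi.
by apply: subn; rewrite Wj.
Qed.

Lemma sep_split (T : eqType) (s : seq (seq T)) i j :
  i != j -> (i < size s)%N -> (j < size s)%N ->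
  exists rest, size rest = (size s - 2)%N /\ perm_eq s [:: nth [::] s i, nth [::] s j & rest].
Proof.
move=> ij hi hj.
set r := [seq k <- iota 0 (size s) | (k != i) && (k != j)].
have pr : perm_eq (iota 0 (size s)) [:: i, j & r].
  apply: uniq_perm; first exact: iota_uniq.
    rewrite /= !inE /r !mem_filter (negbTE ij) !eqxx /= ?andbF ?andbT /=.
    exact: filter_uniq (iota_uniq _ _).
  move=> k; rewrite !inE /r mem_filter mem_iota /= add0n.
  case: (eqVneq k i) => [->|ki]; first by rewrite hi.
  case: (eqVneq k j) => [->|kj]; first by rewrite hj.
  by [].
exists (map (nth [::] s) r); split.
  have := perm_size pr; rewrite size_iota /= size_map; lia.
have := perm_map (nth [::] s) pr.
by rewrite -/(mkseq _ _) mkseq_nth.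
Qed.

Lemma max_ex (P : nat -> Prop) B :
  (exists n, P n) -> (forall n, P n -> (n <= B)%N) -> exists k, P k /\ forall x, P x -> (x <= k)%N.
Proof.
move=> [n Pn] hB.
suff : forall C, (exists n, P n /\ (n <= C)%N) ->
   exists k, P k /\ forall x, P x -> (x <= C)%N -> (x <= k)%N.
  move=> H; have [k [Pk hk]] := H B (ex_intro _ n (conj Pn (hB n Pn))).
  by exists k; split => // x Px; apply: hk => //; apply: hB.
elim=> [|C IH] [n' [Pn' hn']].
  exists n'; split => // x _; have : n' = 0 by lia. by move=> ->.
case: (classic (P C.+1)) => [PC|nPC].
  by exists C.+1; split.
have [|k [Pk hk]] := IH.
  exists n'; split => //; case: (ltngtP n' C.+1) => //; [lia | by move=> e; move: Pn'; rewrite e].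
exists k; split => // x Px hx; apply: hk => //.
case: (ltngtP x C.+1) => //; [lia | by move=> e; move: Px; rewrite e].
Qed.

Lemma min_ex (P : nat -> Prop) n : P n -> exists k, P k /\ forall x, P x -> (k <= x)%N.
Proof.
elim: n {-2}n (leqnn n) => [|N IH] n hn Pn.
  exists n; split => // x _; lia.
case: (classic (exists x, P x /\ (x < n)%N)) => [[x [Px hx]]|H].
  apply: (IH x) => //; lia.
exists n; split => // x Px; case: (leqP n x) => // hx; exfalso; apply: H; by exists x.
Qed.

Lemma nth_mem_lt (T : eqType) (s : seq (seq T)) i (x : T) :
  x \in nth [::] s i -> (i < size s)%N.
Proof. by case: (ltnP i (size s)) => // /(nth_default [::]) ->. Qed.

Theorem lemma5p4 (gT : finGroupType) :
  (3 <= #|gT|)%N -> propertyP gT ->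
  forall (S : seq gT) (d : nat), prod_one S -> is_max_Delta S d -> (2 <= d)%N ->
  exists (T : seq gT) (d' : nat),
    prod_one T /\ (size T < size S)%N /\ is_max_Delta T d' /\ (d - 1 <= d')%N.
Proof.
move=> _ hP S d hS [[m [m' [hmm' [Lm [Lm' [gap ed]]]]]] _] hd.
have [fs [sfs [afs pfs]]] := Lm.
have [ts [sts [pts ats]]] := orderings afs.
have [zs' [sz' [az' pz']]] := Lm'.
have pflat : perm_eq (flatten ts) (flatten zs').
  apply: perm_trans pz'; rewrite perm_sym; exact: perm_trans pfs pts.
have [u [u1 [u2 [h1 [h2 [hu [Eu [i [j [ij [hi hj]]]]]]]]]]] :
  exists u u1 u2 h1 h2, u \in ts /\ u = u1 ++ [:: h1, h2 & u2] /\ sep zs' h1 h2.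
  apply: NNPP => H.
  have := @count_bound _ (size (flatten ts) + size ts) ts zs' (leqnn _) pflat.
  have c1 : count (@nn gT) zs' = size zs'.
    rewrite -count_predT; apply: eq_in_count => U hU.
    by rewrite /nn (atom_nonnil (az' U hU)).
  have c2 := count_size (@nn gT) ts.
  have Hn : (forall u, u \in ts -> forall u1 u2 a b, u = u1 ++ [:: a, b & u2] -> ~ sep zs' a b).
    move=> u hu u1 u2 a b E hs; apply: H; by exists u, u1, u2, a, b.
  move=> /(_ Hn); rewrite c1 sz' => h; move: c2; rewrite sts sfs => h'.
  have := leq_trans h h'; lia.
have [au pu] := ats u hu.
set g := h1 * h2.
set F := flatten (rem u ts).
set R := u1 ++ u2 ++ F.
have pS : perm_eq S [:: h1, h2 & R].
  apply: (perm_trans pfs); apply: (perm_trans pts).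
  apply: (perm_trans (perm_flatten (perm_to_rem hu))).
  rewrite /= -/F {1}Eu -catA -[[:: h1, h2 & u2] ++ F]/([:: h1; h2] ++ (u2 ++ F)) perm_catCA //.
have LTm : in_L (g :: R) m.
  exists ((g :: u1 ++ u2) :: rem u ts); split.
    have sts0 : (0 < size ts)%N by case: (ts) hu.
    by rewrite /= size_rem // prednK // sts sfs.
  split; last by rewrite /= /R /F catA.
  move=> U; rewrite inE => /orP [/eqP ->|/mem_rem hU]; last by case: (ats U hU).
  by apply: merge_atom; rewrite -Eu.
have hi' := nth_mem_lt hi; have hj' := nth_mem_lt hj.
have [rest [srest prest]] := sep_split ij hi' hj'.
set W1 := nth [::] zs' i in hi prest; set W2 := nth [::] zs' j in hj prest.
have aW1 : atom W1 by apply: az'; exact: mem_nth.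
have aW2 : atom W2 by apply: az'; exact: mem_nth.
have [w1 [pw1 hw1]] := rot_prod aW1.1 hi.
have [w2 [pw2 hw2]] := rot_prod aW2.1 hj.
have pX : prod_one (g :: (w1 ++ w2)).
  exists (w1 ++ g :: w2); split; first by rewrite -cat1s perm_catCA.
  rewrite prod_cat prod_cons -(mulg1_eq hw1) /g -!mulgA mulKg; exact: hw2.
have [fsX [aX pfX]] := factor_exists pX.
have nX : (0 < size fsX)%N.
  by case: (fsX) pfX => // /perm_size.
have pR : perm_eq R (w1 ++ w2 ++ flatten rest).
  rewrite -(perm_cons h2) -(perm_cons h1) perm_sym.
  apply: (perm_trans _ pS); rewrite perm_sym.
  apply: (perm_trans pz'); apply: (perm_trans (perm_flatten prest)) => /=.
  rewrite catA; apply: perm_trans (perm_cat (perm_cat pw1 pw2) (perm_refl _)) _.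
  by rewrite -catA /= perm_cons -(cat1s h2 (w2 ++ _)) perm_catCA.
have LTj : in_L (g :: R) (size fsX + (m' - 2)).
  exists (fsX ++ rest); split; first by rewrite size_cat srest sz'.
  split.
    move=> U; rewrite mem_cat => /orP [/aX //|hU]; apply: az'.
    by rewrite (perm_mem prest) !inE hU !orbT.
  rewrite flatten_cat; apply: (perm_trans _ (perm_cat pfX (perm_refl _))).
  by rewrite /= perm_cons -catA.
have tr : forall x, in_L (g :: R) x -> in_L S x \/ in_L S x.+1.
  by move=> x; apply: transferP.
have [a [[La ha] maxa]] := @max_ex (fun x => in_L (g :: R) x /\ (x <= m)%N) m
   (ex_intro _ m (conj LTm (leqnn m))) (fun n H => H.2).
have hjm : (m' - 1 <= size fsX + (m' - 2))%N.
  clear -nX; lia.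
have [b [[Lb hb] minb]] := @min_ex (fun x => in_L (g :: R) x /\ (m' - 1 <= x)%N)
   (size fsX + (m' - 2)) (conj LTj hjm).
have DT : in_Delta (g :: R) (b - a).
  exists a, b; split; first by clear -ha hb hd ed; lia.
  split=> //; split=> //; split=> //.
  move=> x /andP [h1x h2x] Lx.
  case: (leqP x m) => hxm.
    by have := maxa x (conj Lx hxm); clear -h1x; lia.
  case: (leqP (m' - 1) x) => hxm'.
    by have := minb x (conj Lx hxm'); clear -h2x; lia.
  case: (tr x Lx) => H.
    by apply: (gap x) => //; apply/andP; split; clear -hxm hxm'; lia.
  by apply: (gap x.+1) => //; apply/andP; split; clear -hxm hxm'; lia.
have bT : forall e, in_Delta (g :: R) e -> (e <= size (g :: R))%N.
  move=> e [m1 [m2 [_ [_ [L2 [_ E]]]]]]; rewrite E; exact: leq_trans (leq_subr _ _) (in_L_le L2).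
have [d' [Dd' maxd']] := @max_ex (in_Delta (g :: R)) (size (g :: R)) (ex_intro _ _ DT) bT.
exists (g :: R), d'; split.
  have [fT [sfT [afT pfT]]] := LTm.
  apply: prod_one_perm (prod_one_flatten (fun U hU => (afT U hU).1)).
  by rewrite perm_sym.
split; first by rewrite (perm_size pS).
split; first by split.
have := maxd' _ DT; clear -ha hb ed hd; lia.
Qed.
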